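(* Let $T>0$, $N\ge2$, $h=T/N$, $t_n=nh$, and let $\beta,\gamma\in\mathbb R$ satisfy either (C1) $\beta<0$, $\gamma<0$ and $-1<\beta+\gamma<0$, or (C2) $\beta\ge0$ and $\gamma\in(-1,0)$. Then there is a constant $C$ (independent of $N$) such that for all $1<j\le N$, $\tau\in(t_{j-1},t_j]$ and $\eta\in(0,t_{j-1}]$, $$\int_0^\eta(\eta-r)^\beta\big((t_{j-1}-r)^\gamma-(\tau-r)^\gamma\big)\,\mathrm dr\le Ch^{(\beta+\gamma+1)\wedge(\gamma+1)}.$$
   Context: $a\wedge b=\min\{a,b\}$. *)

(* Defs.v *)
From HB Require Import structures.
From mathcomp Require Import all_boot all_order all_algebra.
From mathcomp Require Import all_classical all_reals all_analysis.
Set Implicit Arguments. Unset Strict Implicit. Unset Printing Implicit Defensive.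
Import Order.TTheory GRing.Theory Num.Theory.

Local Open Scope ring_scope.

Definition grid_t (R : realType) (T : R) (N n : nat) : R := n%:R * (T / N%:R).

(* Main.v *)
Require Import Defs.
From HB Require Import structures.
From mathcomp Require Import all_boot all_order all_algebra.
From mathcomp Require Import all_classical all_reals all_analysis.
From mathcomp Require Import measurable_realfun.
From mathcomp Require Import ring lra.
Import Order.TTheory GRing.Theory Num.Theory.
Local Open Scope classical_set_scope.
Local Open Scope ring_scope.
Lemma powR_anti (R : realType) (x y g : R) : 0 < x -> x <= y -> g <= 0 ->
  y `^ g <= x `^ g.
Proof.
move=> x0 xy g0; have y0 : 0 < y by exact: lt_le_trans xy.
rewrite /powR !gt_eqF // ler_expR ler_wnM2l // ler_ln // posrE.
Qed.

Lemma D_anti (R : realType) (x y d g : R) : 0 < x -> x <= y -> 0 < d -> g <= 0 ->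
  y `^ g - (y + d) `^ g <= x `^ g - (x + d) `^ g.
Proof.
move=> x0 xy d0 g0; have y0 : 0 < y by exact: lt_le_trans xy.
have HE z : 0 < z -> z `^ g - (z + d) `^ g = z `^ g * (1 - (1 + d / z) `^ g).
  move=> z0; have -> : z + d = z * (1 + d / z).
    by rewrite mulrDr mulr1 mulrCA divff ?gt_eqF // mulr1.
  rewrite powRM ?ltW //; last by rewrite addr_gt0 // divr_gt0.
  by rewrite mulrBr mulr1.
rewrite HE // HE //; apply: ler_pM.
- exact: powR_ge0.
- rewrite subr_ge0; have := @powR_anti R 1 (1 + d / y) g ltr01.
  rewrite powR1; apply => //.
  by rewrite lerDl divr_ge0 // ltW.
- exact: powR_anti.
- rewrite lerD2l lerN2; apply: powR_anti => //.
    by rewrite ltr_pwDl // divr_ge0 // ltW.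
  by rewrite lerD2l ler_pM2l // lef_pV2.
Qed.
Lemma dpow (R : realType) (e q r : R) : r < e ->
  is_derive r 1 (fun s => (e - s) `^ q) (q * (e - r) `^ (q - 1) * -1).
Proof.
move=> re.
have h1 : is_derive r (1:R) (fun s : R => e - s) (-1).
  have := @is_deriveB R R R (cst e) id r 1 0 1 _ _.
  by rewrite sub0r; apply.
have h2 : is_derive (e - r) 1 (@powR R ^~ q) (q * (e - r) `^ (q - 1)).
  by apply: (@is_derive1_powR R q (e - r)); rewrite subr_gt0.
exact (is_derive1_comp (g := fun s => e - s) (x := r) h2 h1).
Qed.

Lemma dF (R : realType) (c d q r : R) : r < c -> 0 < d -> q != 0 ->
  is_derive r 1 (fun s => ((c + d - s) `^ q - (c - s) `^ q) / q)
    ((c - r) `^ (q - 1) - (c + d - r) `^ (q - 1)).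
Proof.
move=> rc d0 q0.
have rcd : r < c + d by rewrite (lt_le_trans rc) // lerDl ltW.
have := @is_deriveB R R R _ _ r 1 _ _ (@dpow R (c + d) q r rcd) (@dpow R c q r rc).
move=> H.
have := @is_deriveM R R (fun s => (c + d - s) `^ q - (c - s) `^ q) (cst q^-1) r 1 _ 0 H _.
move=> /(_ (is_derive_cst _ _ _)) H3.
set A := (c + d - r) `^ (q - 1); set B := (c - r) `^ (q - 1).
have -> : B - A = ((c + d - r) `^ q - (c - r) `^ q) *: 0 +
          cst q^-1 r *: (q * A * -1 - q * B * -1).
  rewrite scaler0 add0r /= /GRing.scale /=.
  by rewrite !mulrN1 opprK mulrDr mulrN !mulrA mulVf // !mul1r addrC.
exact H3.
Qed.
Lemma le_powR01 (R : realType) (t q : R) : 0 <= t <= 1 -> 0 < q <= 1 -> t <= t `^ q.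
Proof.
move=> /andP[t0 t1] /andP[q0 q1].
have [->|tn0] := eqVneq t 0; first by rewrite powR0 ?gt_eqF.
by apply: ger1_powR => //; rewrite t1 andbT lt_neqAle eq_sym tn0.
Qed.

Lemma powR_subadd (R : realType) (x d q : R) : 0 <= x -> 0 <= d -> 0 < q <= 1 ->
  (x + d) `^ q <= x `^ q + d `^ q.
Proof.
move=> x0 d0 q01; have q0 : 0 < q by case/andP: q01.
have [s0|sn0] := eqVneq (x + d) 0.
  by rewrite s0 powR0 ?gt_eqF // addr_ge0 // powR_ge0.
have sp : 0 < x + d by rewrite lt_neqAle eq_sym sn0 addr_ge0.
have ex : x = (x + d) * (x / (x + d)) by rewrite mulrCA divff ?mulr1.
have ed : d = (x + d) * (d / (x + d)) by rewrite mulrCA divff ?mulr1.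
have s0 : 0 <= x + d by exact: ltW.
have hxs : 0 <= x / (x + d) by exact: divr_ge0.
have hds : 0 <= d / (x + d) by exact: divr_ge0.
have hx : x `^ q = (x + d) `^ q * (x / (x + d)) `^ q.
  by rewrite -(powRM _ s0 hxs) -ex.
have hd : d `^ q = (x + d) `^ q * (d / (x + d)) `^ q.
  by rewrite -(powRM _ s0 hds) -ed.
rewrite hx hd -mulrDr.
rewrite -{1}(mulr1 ((x + d) `^ q)) ler_wpM2l ?powR_ge0 //.
rewrite (le_trans _ (lerD (@le_powR01 R _ q _ q01) (@le_powR01 R _ q _ q01))) //.
- by rewrite -mulrDl divff.
- by rewrite hxs /= ler_pdivrMr // mul1r lerDl.
- by rewrite hds /= ler_pdivrMr // mul1r lerDr.
Qed.

Lemma int_bound (R : realType) (c eta d p : R) : 0 < eta -> eta <= c -> 0 < d ->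
  -1 < p -> p < 0 ->
  (\int[@lebesgue_measure R]_(r in `]0%R, eta[%classic) ((c - r) `^ p - (c + d - r) `^ p)%:E
    <= ((d `^ (p + 1)) / (p + 1))%:E)%E.
Proof.
move=> eta0 etac d0 p1 p0.
set q := p + 1.
have q0 : 0 < q by rewrite /q; lra.
have q1 : q <= 1 by rewrite /q; lra.
have hp : q - 1 = p by rewrite /q addrK.
pose g r := (c - r) `^ p - (c + d - r) `^ p.
have g0 r : r < c -> 0 <= g r.
  move=> rc; rewrite /g subr_ge0; apply: powR_anti; last exact: ltW.
    by rewrite subr_gt0.
  by rewrite lerD2r lerDl ltW.
have mg (A : set R) : measurable_fun A (EFin \o g).
  have mc (e : R) : measurable_fun A (fun r : R => (e - r) `^ p).
    apply: (measurableT_comp (measurable_powR _)).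
    exact: (measurable_funB (measurable_cst e) (@measurable_id _ _ A)).
  by apply/measurable_EFinP; apply: measurable_funB.
pose F r := ((c + d - r) `^ q - (c - r) `^ q) / q.
have qn0 : q != 0 by rewrite gt_eqF.
have dFg r : r < c -> is_derive r 1 F (g r).
  move=> rc; have := @dF R c d q r rc d0 qn0; rewrite hp; exact.
have dg r : r < c -> derivable g r 1.
  move=> rc; have rcd : r < c + d by rewrite (lt_le_trans rc) // lerDl ltW.
  by case: (is_deriveB (@dpow R c p r rc) (@dpow R (c + d) p r rcd)).
pose S n := `[0%R, eta - eta / n.+2%:R]%classic.
have bn n : 0 < eta - eta / n.+2%:R < eta.
  apply/andP; split; last by rewrite ltrBlDr ltrDl divr_gt0.
  rewrite subr_gt0 ltr_pdivrMr // ltr_pMr // ltr1n //.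
have US : `[0%R, eta[%classic = \bigcup_n S n.
  apply/seteqP; split => x /=.
  - rewrite in_itv /= => /andP[x0 xe].
    have ex0 : 0 < eta - x by rewrite subr_gt0.
    exists (Num.truncn (eta / (eta - x))) => //.
    rewrite /S /= in_itv /= x0 /= lerBrDl -lerBrDr.
    rewrite ler_pdivrMr // mulrC -ler_pdivrMr //.
    apply: ltW; apply: (lt_trans (truncnS_gt _)).
    by rewrite ltr_nat.
  - move=> [n _]; rewrite /S /= !in_itv /= => /andP[x0 xb].
    by rewrite x0 (le_lt_trans xb) //; case/andP: (bn n).
have gS x n : S n x -> 0 <= g x.
  rewrite /S /= in_itv /= => /andP[_ xb]; apply: g0.
  by rewrite (le_lt_trans xb) // (lt_le_trans _ etac) //; case/andP: (bn n).
have H1 : (\int[@lebesgue_measure R]_(r in `]0%R, eta[%classic) (g r)%:E <=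
   \int[@lebesgue_measure R]_(r in `[0%R, eta[%classic) (g r)%:E)%E.
  apply: ge0_subset_integral => //.
  - exact: mg.
  - move=> x; rewrite /= in_itv /= => /andP[_ xe]; rewrite lee_fin; apply: g0.
    exact: lt_le_trans etac.
  - by apply: subset_itv; rewrite bnd_simp.
apply: (le_trans H1).
rewrite US.
have ndS : nondecreasing_seq S.
  apply/nondecreasing_seqP => n; rewrite subsetEset; apply: subset_itv; rewrite bnd_simp //.
  rewrite lerD2l lerN2 ler_pM2l // lef_pV2 ?posrE ?ltr0n // ler_nat //.
have cv := @ge0_nondecreasing_set_cvg_integral _ (measurableTypeR R) R S (fun r => (g r)%:E)
  lebesgue_measure ndS (fun n => measurable_itv _) (fun n => mg _)
  (fun n x Snx => gS x n Snx).
rewrite -(cvg_lim _ cv) //; apply: lime_le; first by apply/cvg_ex; eexists; exact: cv.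
apply: nearW => n.
set b := eta - eta / n.+2%:R.
have /andP[b0 be] := bn n.
have bc : b < c := lt_le_trans be etac.
rewrite /S -/b (@continuous_FTC2 R g F 0 b b0).
- rewrite lee_fin /F subr0 -mulrBl ler_pM2r ?invr_gt0 //.
  have cb0 : 0 <= c - b by rewrite subr_ge0 ltW.
  have h1 := @powR_subadd R (c - b) d q cb0 (ltW d0) (andb_true_intro (conj q0 q1)).
  have h2 : c `^ q <= (c + d) `^ q.
    have c0 : 0 <= c by exact: le_trans (ltW eta0) etac.
    apply: ge0_ler_powR; first exact: ltW.
    + by rewrite nnegrE.
    + by rewrite nnegrE addr_ge0 // ltW.
    + by rewrite lerDl ltW.
  have -> : c + d - b = c - b + d by rewrite addrAC.
  rewrite subr0; lra.
- apply: derivable_within_continuous => x; rewrite in_itv /= => /andP[_ xb].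
  by apply: dg; exact: le_lt_trans xb bc.
- split.
  + move=> x; rewrite in_itv /= => /andP[_ xb]; by case: (dFg x (lt_trans xb bc)).
  + apply: cvg_at_right_filter; apply: differentiable_continuous.
    by apply/derivable1_diffP; case: (dFg 0 (lt_trans b0 bc)).
  + apply: cvg_at_left_filter; apply: differentiable_continuous.
    by apply/derivable1_diffP; case: (dFg b bc).
- move=> x; rewrite in_itv /= => /andP[_ xb]; rewrite derive1E.
  by case: (dFg x (lt_trans xb bc)).
Qed.



Lemma reduce (R : realType) (f : R -> R) (K c eta d p : R) : 0 < eta -> eta <= c ->
  0 < d -> -1 < p -> p < 0 -> 0 <= K ->
  measurable_fun `]0%R, eta[ f ->
  (forall r, 0 < r < eta -> 0 <= f r <= K * ((c - r) `^ p - (c + d - r) `^ p)) ->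
  (\int[@lebesgue_measure R]_(r in `[0%R, eta]%classic) (f r)%:E
    <= (K * ((d `^ (p + 1)) / (p + 1)))%:E)%E.
Proof.
move=> eta0 etac d0 p1 p0 K0 mf fb.
rewrite integral_itv_bndoo; last exact/measurable_EFinP.
pose g r := (c - r) `^ p - (c + d - r) `^ p.
have mg : measurable_fun `]0%R, eta[ g.
  have mc (A : set R) (e : R) : measurable_fun A (fun r : R => (e - r) `^ p).
    apply: (measurableT_comp (measurable_powR _)).
    exact: (measurable_funB (measurable_cst e) (@measurable_id _ _ A)).
  exact: measurable_funB.
apply: (@le_trans _ _ (\int[@lebesgue_measure R]_(r in `]0%R, eta[%classic) (K%:E * (g r)%:E))%E).
  apply: ge0_le_integral => //.
  - by move=> x; rewrite /= in_itv /= => /fb /andP[]; rewrite lee_fin.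
  - exact/measurable_EFinP.
  - apply: emeasurable_funM => //; exact/measurable_EFinP.
  - by move=> x; rewrite /= in_itv /= => /fb /andP[_]; rewrite -EFinM lee_fin.
rewrite ge0_integralZl_EFin //.
- rewrite EFinM; apply: lee_wpmul2l; first by rewrite lee_fin.
  exact: (@int_bound R c eta d p eta0 etac d0 p1 p0).
- move=> x; rewrite /= in_itv /= => /andP[_ xe]; rewrite lee_fin /g subr_ge0.
  apply: powR_anti; last exact: ltW.
    by rewrite subr_gt0 (lt_le_trans xe).
  by rewrite lerD2r lerDl ltW.
- exact/measurable_EFinP.
Qed.

Lemma pw1 (R : realType) (x y d b g : R) : 0 < x -> x <= y -> 0 < d -> b <= 0 -> g <= 0 ->
  0 <= x `^ b * (y `^ g - (y + d) `^ g) <= 1 * (x `^ (b + g) - (x + d) `^ (b + g)).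
Proof.
move=> x0 xy d0 b0 g0; have y0 : 0 < y := lt_le_trans x0 xy.
have xd0 : 0 < x + d by rewrite addr_gt0.
have Dge0 : 0 <= y `^ g - (y + d) `^ g.
  by rewrite subr_ge0 powR_anti // lerDl ltW.
apply/andP; split; first by rewrite mulr_ge0 // powR_ge0.
rewrite mul1r (le_trans (ler_wpM2l (powR_ge0 _ _) (@D_anti R x y d g x0 xy d0 g0))) //.
rewrite mulrBr -powRD; last by apply/implyP => _; rewrite (gt_eqF x0).
rewrite lerD2l lerN2 powRD; last by apply/implyP => _; rewrite (gt_eqF xd0).
rewrite ler_wpM2r ?powR_ge0 //; apply: powR_anti => //; rewrite lerDl; exact: ltW.
Qed.

Lemma pw2 (R : realType) (x y d b g T : R) : 0 < x -> x <= y -> y <= T -> 0 < d ->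
  0 <= b -> g <= 0 ->
  0 <= x `^ b * (y `^ g - (y + d) `^ g) <= T `^ b * (y `^ g - (y + d) `^ g).
Proof.
move=> x0 xy yT d0 b0 g0; have y0 : 0 < y := lt_le_trans x0 xy.
have Dge0 : 0 <= y `^ g - (y + d) `^ g.
  by rewrite subr_ge0 powR_anti // lerDl ltW.
apply/andP; split; first by rewrite mulr_ge0 // powR_ge0.
rewrite ler_wpM2r //; apply: ge0_ler_powR => //; rewrite ?nnegrE.
- exact: ltW.
- exact: le_trans (ltW y0) yT.
- exact: le_trans xy yT.
Qed.

Lemma grid_facts (R : realType) (T : R) (N j : nat) : 0 < T -> (2 <= N)%N ->
  (1 < j)%N -> (j <= N)%N ->
  [/\ 0 < T / N%:R, grid_t T N j = grid_t T N j.-1 + T / N%:R,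
      grid_t T N j.-1 <= T & 0 <= grid_t T N j.-1].
Proof.
move=> T0 N2 j1 jN.
have N0 : 0 < N%:R :> R by rewrite ltr0n (leq_trans _ N2).
have h0 : 0 < T / N%:R by rewrite divr_gt0.
split => //.
- rewrite /grid_t -{1}(prednK (ltnW j1)) -natr1 mulrDl mul1r //.
- rewrite /grid_t [X in _ <= X](_ : T = N%:R * (T / N%:R)); last first.
    by rewrite mulrCA divff ?gt_eqF // mulr1.
  rewrite ler_pM2r // ler_nat.
  by rewrite (leq_trans (leq_pred _) jN).
- by rewrite /grid_t mulr_ge0 // ltW.
Qed.

Theorem lemma3p5 (R : realType) (T beta gamma : R) (hT : 0 < T)
  (hbg : (beta < 0 /\ gamma < 0 /\ -1 < beta + gamma /\ beta + gamma < 0) \/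
         (0 <= beta /\ -1 < gamma /\ gamma < 0)) :
  exists C : R, forall (N : nat), (2 <= N)%N ->
    forall (j : nat), (1 < j)%N -> (j <= N)%N ->
    forall tau eta : R,
      grid_t T N j.-1 < tau -> tau <= grid_t T N j ->
      0 < eta -> eta <= grid_t T N j.-1 ->
      (\int[@lebesgue_measure R]_(r in `[0%R, eta]%classic)
         ((eta - r) `^ beta *
          ((grid_t T N j.-1 - r) `^ gamma - (tau - r) `^ gamma))%:E
       <= (C * (T / N%:R) `^ (Num.min (beta + gamma + 1) (gamma + 1)))%:E)%E.
Proof.
have mc (A : set R) (e q : R) : measurable_fun A (fun r : R => (e - r) `^ q).
  apply: (measurableT_comp (measurable_powR _)).
  exact: (measurable_funB (measurable_cst e) (@measurable_id _ _ A)).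
case: hbg => [[b0 [g0 [bg1 bg0]]] | [b0 [g1 g0]]].
- exists (1 / (beta + gamma + 1)).
  move=> N N2 j j1 jN tau eta t1 t2 e0 ea.
  have [h0 hj aT a0] := @grid_facts R T N j hT N2 j1 jN.
  set a := grid_t T N j.-1 in t1 t2 ea hj aT a0 *.
  set h := T / N%:R in h0 hj *.
  have -> : Num.min (beta + gamma + 1) (gamma + 1) = beta + gamma + 1.
    by apply: min_l; rewrite lerD2r gerDr ltW.
  have d0 : 0 < tau - a by rewrite subr_gt0.
  have dh : tau - a <= h by rewrite lerBlDl -hj.
  apply: le_trans (@reduce R _ 1 eta eta (tau - a) (beta + gamma) e0 (lexx _) d0 bg1 bg0 ler01 _ _) _.
  + apply: measurable_funM => //; exact: measurable_funB.
  + move=> r /andP[r0 re].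
    have -> : tau - r = a - r + (tau - a) by ring.
    have -> : eta + (tau - a) - r = eta - r + (tau - a) by ring.
    apply: pw1 => //; [by rewrite subr_gt0 | by rewrite lerD2r | exact: ltW | exact: ltW].
  + rewrite lee_fin mul1r mul1r [X in _ <= X]mulrC ler_pM2r ?invr_gt0; last by lra.
    apply: ge0_ler_powR => //; [lra | rewrite nnegrE; exact: ltW | rewrite nnegrE; exact: ltW].
- exists (T `^ beta / (gamma + 1)).
  move=> N N2 j j1 jN tau eta t1 t2 e0 ea.
  have [h0 hj aT a0] := @grid_facts R T N j hT N2 j1 jN.
  set a := grid_t T N j.-1 in t1 t2 ea hj aT a0 *.
  set h := T / N%:R in h0 hj *.
  have -> : Num.min (beta + gamma + 1) (gamma + 1) = gamma + 1.
    by apply: min_r; rewrite lerD2r lerDr.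
  have d0 : 0 < tau - a by rewrite subr_gt0.
  have dh : tau - a <= h by rewrite lerBlDl -hj.
  apply: le_trans (@reduce R _ (T `^ beta) a eta (tau - a) gamma e0 ea d0 g1 g0 (powR_ge0 _ _) _ _) _.
  + apply: measurable_funM => //; exact: measurable_funB.
  + move=> r /andP[r0 re].
    have -> : tau - r = a - r + (tau - a) by ring.
    have -> : a + (tau - a) - r = a - r + (tau - a) by ring.
    apply: pw2 => //; [by rewrite subr_gt0 | by rewrite lerD2r | | exact: ltW].
    by rewrite lerBlDr (le_trans aT) // lerDl ltW.
  + rewrite lee_fin -mulrA ler_wpM2l ?powR_ge0 //.
    rewrite [X in _ <= X]mulrC ler_pM2r ?invr_gt0; last by lra.
    apply: ge0_ler_powR => //; [lra | rewrite nnegrE; exact: ltW | rewrite nnegrE; exact: ltW].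
Qed.
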